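(* Let $(P,\preceq)$ be a poset, $\mathcal{X}:=\{X\subseteq P\mid (X,\preceq)\text{ well-ordered}\}$, and $\Lambda$ a set. The $\Lambda$-system algebra of causal systems over $\mathcal{X}$ is a composition-order invariant functional $\Lambda$-system algebra over $\mathcal{X}$; in particular its set of systems is closed under parallel composition and interface connection.
   Context: $\mathcal{X}^{\mathcal{I}}$ is the set of functions $\mathcal{I}\to\mathcal{X}$; $\mathbin{\triangle}$ is symmetric difference; $x\prec y$ means $x\preceq y$, $x\ne y$. For finite disjoint $\mathcal{I},\mathcal{O}\subseteq\Lambda$, a causal $(\mathcal{I},\mathcal{O})$-system over $\mathcal{X}$ is a function $s:\mathcal{X}^{\mathcal{I}}\to\mathcal{X}^{\mathcal{O}}$ such that for all $\mathbf{X},\mathbf{X}'$, $o\in\mathcal{O}$, $y\in s(\mathbf{X})(o)\mathbin{\triangle}s(\mathbf{X}')(o)$ there exist $i\in\mathcal{I}$, $x\in\mathbf{X}(i)\mathbin{\triangle}\mathbf{X}'(i)$ with $x\prec y$. The $\Lambda$-system algebra of causal systems has as systems all causal $(\mathcal{I},\mathcal{O})$-systems for finite disjoint $\mathcal{I},\mathcal{O}\subseteq\Lambda$, with $\lambda(s)=\mathcal{I}\cup\mathcal{O}$, $\Gamma(s)=\{\{i,o\}\mid i\in\mathcal{I},o\in\mathcal{O}\}$, parallel composition $(s_1\parallel s_2)(\mathbf{X})(o_j)=s_j(\mathbf{X}|_{\mathcal{I}_j})(o_j)$ for $s_j$ with index sets $\mathcal{I}_j,\mathcal{O}_j$ ($j=1,2$,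 all four pairwise disjoint), and interface connection $\gamma_{i,o}(s)(\mathbf{X})=s(\mathbf{X}\cup\{(i,X^* )\})|_{\mathcal{O}\setminus\{o\}}$ for $\mathbf{X}\in\mathcal{X}^{\mathcal{I}\setminus\{i\}}$, where $X^*$ is the unique $X_i\in\mathcal{X}$ with $s(\mathbf{X}\cup\{(i,X_i)\})(o)=X_i$. Being a functional $\Lambda$-system algebra means that the set of systems is closed under $\parallel$ and $\gamma$ and $\{i,o\}\in\Gamma(s_1\parallel s_2)\iff\{i,o\}\in\Gamma(s_j)$ for $i,o\in\lambda(s_j)$ when $\lambda(s_1)\cap\lambda(s_2)=\emptyset$. Composition-order invariance means: (i) for all $s$, $\{i,o\}\in\Gamma(s)$, $\{i',o'\}\in\Gamma(\gamma_{i,o}(s))$: $\{i',o'\}\in\Gamma(s)$, $\{i,o\}\in\Gamma(\gamma_{i',o'}(s))$, and $\gamma_{i',o'}(\gamma_{i,o}(s))=\gamma_{i,o}(\gamma_{i',o'}(s))$; (ii) $\parallel$ is associative and commutative; (iii) $\gamma_{i,o}(s_1)\parallel s_2=\gamma_{i,o}(s_1\parallel s_2)$ whenever $\lambda(s_1)\cap\lambda(s_2)=\emptyset$ and $\{i,o\}\in\Gamma(s_1)$. *)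

(* Defs.v *)
From Stdlib Require Import List Classical ClassicalEpsilon
  FunctionalExtensionality PropExtensionality ProofIrrelevance.

Unset Implicit Arguments.

Section CausalSystems.

Variable P : Type.
Variable le : P -> P -> Prop.
Variable L : Type.

Definition plt (x y : P) : Prop := le x y /\ x <> y.

Definition well_ordered (X : P -> Prop) : Prop :=
  (forall x y, X x -> X y -> le x y \/ le y x) /\
  (forall A : P -> Prop, (forall a, A a -> X a) -> (exists a, A a) ->
     exists m, A m /\ forall a, A a -> le m a).

Definition WO : Type := { X : P -> Prop | well_ordered X }.

Definition symdiff (A B : P -> Prop) (y : P) : Prop :=
  (A y /\ ~ B y) \/ (B y /\ ~ A y).

Definition finite_set (I : L -> Prop) : Prop :=
  exists l : list L, forall x, I x -> In x l.

(* A (candidate) system: index sets I, O ⊆ Λ and a function 𝒳^I -> 𝒳^O,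
   where 𝒳^I is the type of functions from {l | I l} to 𝒳. *)
Record system : Type := Sys {
  sI : L -> Prop;
  sO : L -> Prop;
  sfun : ({ l | sI l } -> WO) -> ({ l | sO l } -> WO)
}.

Definition lab (s : system) (l : L) : Prop := sI s l \/ sO s l.

(* {a,b} ∈ Γ(s) = {{i,o} | i ∈ I, o ∈ O}  (unordered pair) *)
Definition InGamma (s : system) (a b : L) : Prop :=
  (sI s a /\ sO s b) \/ (sI s b /\ sO s a).

Definition causal (s : system) : Prop :=
  finite_set (sI s) /\ finite_set (sO s) /\
  (forall l, sI s l -> sO s l -> False) /\
  forall (X X' : { l | sI s l } -> WO) (o : { l | sO s l }) (y : P),
    symdiff (proj1_sig (sfun s X o)) (proj1_sig (sfun s X' o)) y ->
    exists (i : { l | sI s l }) (x : P),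
      symdiff (proj1_sig (X i)) (proj1_sig (X' i)) x /\ plt x y.

Definition lab_disjoint (s1 s2 : system) : Prop :=
  forall l, lab s1 l -> lab s2 l -> False.

Lemma or_resolve (A B : Prop) : A \/ B -> ~ A -> B.
Proof. intros [a|b] n; [contradiction|exact b]. Qed.

Definition par (s1 s2 : system) : system :=
  Sys (fun l => sI s1 l \/ sI s2 l) (fun l => sO s1 l \/ sO s2 l)
    (fun X o =>
       match excluded_middle_informative (sO s1 (proj1_sig o)) with
       | left h =>
           sfun s1 (fun l => X (exist _ (proj1_sig l) (or_introl (proj2_sig l))))
                (exist _ (proj1_sig o) h)
       | right h =>
           sfun s2 (fun l => X (exist _ (proj1_sig l) (or_intror (proj2_sig l))))
                (exist _ (proj1_sig o) (or_resolve _ _ (proj2_sig o) h))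
       end).

Lemma empty_wo : well_ordered (fun _ => False).
Proof.
  split.
  - intros x y [].
  - intros A HA [a Ha]. destruct (HA a Ha).
Qed.

Definition WO_inhabited : inhabited WO :=
  inhabits (exist _ (fun _ => False) empty_wo).

Definition extend (I : L -> Prop) (i : L)
    (X : { l | I l /\ l <> i } -> WO) (Xi : WO) : { l | I l } -> WO :=
  fun l =>
    match excluded_middle_informative (proj1_sig l = i) with
    | left _ => Xi
    | right h => X (exist _ (proj1_sig l) (conj (proj2_sig l) h))
    end.

Definition restrict (O : L -> Prop) (o : L)
    (Y : { l | O l } -> WO) : { l | O l /\ l <> o } -> WO :=
  fun l => Y (exist _ (proj1_sig l) (proj1 (proj2_sig l))).

Definition is_fix (s : system) (i o : L)
    (X : { l | sI s l /\ l <> i } -> WO) (Xi : WO) : Prop :=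
  forall h : sO s o, sfun s (extend (sI s) i X Xi) (exist _ o h) = Xi.

(* X* : the (unique, see the theorem) solution *)
Definition Xstar (s : system) (i o : L)
    (X : { l | sI s l /\ l <> i } -> WO) : WO :=
  epsilon WO_inhabited (is_fix s i o X).

Definition conn (s : system) (i o : L) : system :=
  Sys (fun l => sI s l /\ l <> i) (fun l => sO s l /\ l <> o)
    (fun X => restrict (sO s) o (sfun s (extend (sI s) i X (Xstar s i o X)))).

(* γ indexed by the unordered pair {a,b} ∈ Γ(s): the member of the pair
   lying in I is the connected input, the other one the output. *)
Definition gamma (s : system) (a b : L) : system :=
  match excluded_middle_informative (sI s a) with
  | left _ => conn s a b
  | right _ => conn s b a
  end.

End CausalSystems.
Arguments Sys {P le L} sI sO sfun.
Arguments sI {P le L} s _.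
Arguments sO {P le L} s _.
Arguments sfun {P le L} s _ _.
Arguments lab {P le L} s l.
Arguments InGamma {P le L} s a b.
Arguments causal {P le L} s.
Arguments lab_disjoint {P le L} s1 s2.
Arguments par {P le L} s1 s2.
Arguments is_fix {P le L} s i o X Xi.
Arguments gamma {P le L} s a b.
Arguments conn {P le L} s i o.
Arguments Xstar {P le L} s i o X.

(* Main.v *)
Require Import Defs.
From Stdlib Require Import List Classical ClassicalEpsilon
  FunctionalExtensionality PropExtensionality ProofIrrelevance.

Section Main.
Variables (P : Type) (le : P -> P -> Prop).
Hypothesis le_refl : forall x, le x x.
Hypothesis le_anti : forall x y, le x y -> le y x -> x = y.
Hypothesis le_trans : forall x y z, le x y -> le y z -> le x z.

Notation plt := (plt P le).
Notation WOt := (WO P le).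
Notation sd := (symdiff P).

Definition WF (S : P -> Prop) := forall A : P -> Prop,
  (forall a, A a -> S a) -> (exists a, A a) ->
  exists m, A m /\ forall a, A a -> ~ plt a m.

Lemma plt_le_trans x y z : plt x y -> le y z -> plt x z.
Proof.
  intros [h1 h2] h3; split; [eauto|].
  intro e; subst; apply h2; apply le_anti; auto.
Qed.

Lemma le_plt_trans x y z : le x y -> plt y z -> plt x z.
Proof.
  intros h1 [h2 h3]; split; [eauto|].
  intro e; subst; apply h3; apply le_anti; auto.
Qed.

Lemma plt_irrefl x : ~ plt x x.
Proof. intros [_ h]; auto. Qed.

Lemma WO_WF X : well_ordered P le X -> WF X.
Proof.
  intros [_ Hl] A HA Hne.
  destruct (Hl A HA Hne) as [m [Hm Hmin]].
  exists m; split; auto.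
  intros a Ha [h1 h2]; apply h2; apply le_anti; auto.
Qed.

Lemma WF_sub S T : (forall y, S y -> T y) -> WF T -> WF S.
Proof. intros H HT A HA Hne; apply HT; auto. Qed.

Lemma WF_union S T : WF S -> WF T -> WF (fun y => S y \/ T y).
Proof.
  intros HS HT A HA Hne.
  destruct (classic (exists a, A a /\ S a)) as [HAS|HAS].
  - destruct (HS (fun a => A a /\ S a) (fun a h => proj2 h) HAS) as [m1 [[Hm1 Sm1] Hmin1]].
    destruct (classic (exists a, A a /\ plt a m1)) as [Hb|Hb].
    + destruct (HT (fun a => A a /\ T a /\ plt a m1)) as [m2 [[Hm2 [Tm2 Lm2]] Hmin2]].
      * intros a h; tauto.
      * destruct Hb as [a [Ha La]]. exists a; split; [auto| split; [|auto]].
        destruct (HA a Ha); auto. exfalso; exact (Hmin1 a (conj Ha H) La).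
      * exists m2; split; auto.
        intros b Hb' Lb.
        assert (Lbm : plt b m1) by (eapply plt_le_trans; [exact Lb| apply Lm2]).
        destruct (HA b Hb') as [Sb|Tb].
        -- exact (Hmin1 b (conj Hb' Sb) Lbm).
        -- exact (Hmin2 b (conj Hb' (conj Tb Lbm)) Lb).
    + exists m1; split; auto. intros a Ha La; apply Hb; eauto.
  - destruct (HT (fun a => A a)) as [m [Hm Hmin]].
    + intros a Ha. destruct (HA a Ha); auto. exfalso; eauto.
    + auto.
    + exists m; auto.
Qed.

Lemma WO_eq (X Y : WOt) : (forall y, proj1_sig X y <-> proj1_sig Y y) -> X = Y.
Proof.
  destruct X as [x hx], Y as [y hy]; simpl; intro H.
  assert (x = y) by (apply functional_extensionality; intro z; apply propositional_extensionality; auto).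
  subst; f_equal; apply proof_irrelevance.
Qed.

Lemma WO_neq (X Y : WOt) : X <> Y -> exists y, sd (proj1_sig X) (proj1_sig Y) y.
Proof.
  intro H; apply NNPP; intro H'; apply H; apply WO_eq; intro y.
  split; intro h; apply NNPP; intro h'; apply H'; exists y; unfold symdiff; tauto.
Qed.

Lemma wo_subset (X Y : P -> Prop) : (forall y, X y -> Y y) -> well_ordered P le Y -> well_ordered P le X.
Proof.
  intros H [Ht Hl]; split.
  - intros x y hx hy; apply Ht; auto.
  - intros A HA Hne; apply Hl; auto.
Qed.

Section Fix.
Variable f : WOt -> WOt.
Let F (X : WOt) := proj1_sig (f X).
Hypothesis Hf : forall X X' y, sd (F X) (F X') y ->
  exists x, sd (proj1_sig X) (proj1_sig X') x /\ plt x y.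

Lemma agree (X X' : WOt) y : (forall x, plt x y -> (proj1_sig X x <-> proj1_sig X' x)) ->
  (F X y <-> F X' y).
Proof.
  intro H.
  assert (~ sd (F X) (F X') y).
  { intro hs; destruct (Hf X X' y hs) as [x [hx lx]]. specialize (H x lx).
    unfold symdiff in hx; tauto. }
  unfold symdiff in H0; split; intro; apply NNPP; tauto.
Qed.

Definition dc (A : P -> Prop) y := exists a, A a /\ le y a.

Definition good (A : WOt) :=
  (forall a, proj1_sig A a -> F A a) /\
  (forall y, F A y -> dc (proj1_sig A) y -> proj1_sig A y).

Lemma compat A B y : good A -> good B -> dc (proj1_sig A) y -> dc (proj1_sig B) y ->
  (proj1_sig A y <-> proj1_sig B y).
Proof.
  intros [GA1 GA2] [GB1 GB2] HA HB.
  apply NNPP; intro Hn.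
  set (D := fun y => dc (proj1_sig A) y /\ dc (proj1_sig B) y /\ sd (proj1_sig A) (proj1_sig B) y).
  assert (HW : WF (fun y => proj1_sig A y \/ proj1_sig B y)).
  { apply WF_union; apply WO_WF; [exact (proj2_sig A)| exact (proj2_sig B)]. }
  destruct (HW D) as [m [[Dm1 [Dm2 Dm3]] Hmin]].
  { intros a [_ [_ h]]; unfold symdiff in h; tauto. }
  { exists y; split; auto; split; auto. unfold symdiff; tauto. }
  assert (Hs : sd (F A) (F B) m).
  { destruct Dm3 as [[h1 h2]|[h1 h2]].
    - left; split; auto.
    - right; split; auto. }
  destruct (Hf A B m Hs) as [x [hx lx]].
  apply (Hmin x); auto.
  destruct Dm1 as [a [ha la]], Dm2 as [b [hb lb]].
  split; [exists a|split; [exists b|]]; auto; split; auto; destruct lx; eauto.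
Qed.

Lemma half A B u0 : good A -> good B ->
  proj1_sig A u0 -> ~ dc (proj1_sig B) u0 ->
  (forall x, proj1_sig A x -> ~ dc (proj1_sig B) x -> le u0 x) ->
  F B u0.
Proof.
  intros GA GB Au Du Hl.
  apply (agree A B u0).
  - intros x Lx; split; intro hx.
    + assert (dc (proj1_sig B) x).
      { apply NNPP; intro hn. specialize (Hl x hx hn). destruct Lx as [l1 l2].
        apply l2; apply le_anti; auto. }
      apply (compat A B x GA GB); auto. exists x; auto.
    + apply (compat A B x GA GB); auto.
      * exists u0; split; auto; apply Lx.
      * exists x; auto.
  - apply (proj1 GA); auto.
Qed.

Lemma chain A B : good A -> good B ->
  (forall y, proj1_sig A y -> proj1_sig B y) \/ (forall y, proj1_sig B y -> proj1_sig A y).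
Proof.
  intros GA GB.
  destruct (classic (forall y, proj1_sig A y -> dc (proj1_sig B) y)) as [H1|H1].
  { left; intros y hy. apply (compat A B y GA GB); auto. exists y; auto. }
  destruct (classic (forall y, proj1_sig B y -> dc (proj1_sig A) y)) as [H2|H2].
  { right; intros y hy. apply (compat A B y GA GB); auto. exists y; auto. }
  exfalso.
  destruct (proj2 (proj2_sig A) (fun x => proj1_sig A x /\ ~ dc (proj1_sig B) x)) as [u [[Au Du] Hu]].
  { intros a h; apply h. }
  { apply NNPP; intro h; apply H1; intros y hy; apply NNPP; intro h'; apply h; eauto. }
  destruct (proj2 (proj2_sig B) (fun x => proj1_sig B x /\ ~ dc (proj1_sig A) x)) as [v [[Bv Dv] Hv]].
  { intros a h; apply h. }
  { apply NNPP; intro h; apply H2; intros y hy; apply NNPP; intro h'; apply h; eauto. }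
  assert (Fu : F B u) by (apply (half A B u); auto; intros x h1 h2; apply Hu; auto).
  assert (Fv : F B v) by (apply (proj1 GB); auto).
  destruct (proj1 (proj2_sig (f B)) u v Fu Fv) as [l|l].
  - apply Du; exists v; auto.
  - apply Dv; exists u; auto.
Qed.

Definition U y := exists A : WOt, good A /\ proj1_sig A y.

Lemma U_WO : well_ordered P le U.
Proof.
  split.
  - intros u v [A [GA Au]] [B [GB Bv]].
    destruct (chain A B GA GB) as [h|h].
    + apply (proj1 (proj2_sig B)); auto.
    + apply (proj1 (proj2_sig A)); auto.
  - intros C HC [c Cc].
    destruct (HC c Cc) as [A [GA Ac]].
    destruct (proj2 (proj2_sig A) (fun x => C x /\ proj1_sig A x)) as [m [[Cm Am] Hm]].
    { intros a h; apply h. } { exists c; auto. }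
    exists m; split; auto.
    intros c' Cc'. destruct (HC c' Cc') as [B [GB Bc']].
    destruct (chain A B GA GB) as [h|h].
    + destruct (proj1 (proj2_sig B) m c' (h m Am) Bc') as [l|l]; auto.
      apply Hm; split; auto.
      apply (compat A B c' GA GB); auto; [exists m; auto| exists c'; auto].
    + apply Hm; auto.
Qed.

Definition Uw : WOt := exist _ U U_WO.

Lemma good_Uw : good Uw.
Proof.
  split.
  - intros u [A [GA Au]].
    apply (agree A Uw u).
    + intros x Lx; simpl; split; intro hx.
      * exists A; auto.
      * destruct hx as [B [GB Bx]].
        apply (compat A B x GA GB); auto; [exists u; split; auto; apply Lx | exists x; auto].
    + apply (proj1 GA); auto.
  - intros y Fy [u [[A [GA Au]] l]].
    simpl. exists A; split; auto.
    apply (proj2 GA).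
    + apply (agree Uw A y); auto.
      intros x Lx; simpl; split; intro hx.
      * destruct hx as [B [GB Bx]].
        apply (compat A B x GA GB); auto; [exists u; split; auto; destruct Lx; eauto | exists x; auto].
      * exists A; auto.
    + exists u; auto.
Qed.

Lemma no_ext : ~ exists y, F Uw y /\ ~ dc U y.
Proof.
  intro Hex.
  destruct (proj2 (proj2_sig (f Uw)) (fun y => F Uw y /\ ~ dc U y)) as [m [[Fm Dm] Hm]].
  { intros a h; apply h. } { exact Hex. }
  set (U' := fun y => U y \/ y = m).
  assert (WU' : well_ordered P le U').
  { apply (wo_subset U' (F Uw)); [|exact (proj2_sig (f Uw))].
    intros y [h|h]; [apply (proj1 good_Uw); exact h| subst; auto]. }
  set (U'w := exist _ U' WU' : WOt).
  assert (key : forall y, ~ plt m y -> (F U'w y <-> F Uw y)).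
  { intros y Hy; apply agree. intros x Lx; simpl; unfold U'; split; intro h; auto.
    destruct h; auto. subst; contradiction. }
  assert (G : good U'w).
  { split.
    - intros a [h|h]; apply key.
      + intro L; apply Dm; exists a; split; auto; apply L.
      + apply (proj1 good_Uw); exact h.
      + subst; apply plt_irrefl.
      + subst; auto.
    - intros y Fy [a [Ha la]].
      assert (Hnp : ~ plt m y).
      { intro L. destruct Ha as [Ha|Ha].
        - apply Dm; exists a; split; auto; destruct L; eauto.
        - subst. destruct L as [l1 l2]; apply l2; apply le_anti; auto. }
      apply key in Fy; auto.
      destruct (classic (dc U y)) as [Dy|Dy].
      + left; apply (proj2 good_Uw); auto.
      + right. destruct Ha as [Ha|Ha].
        * exfalso; apply Dy; exists a; auto.
        * subst; apply le_anti; auto. }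
  apply Dm. exists m; split; auto. exists U'w; split; auto. simpl; unfold U'; auto.
Qed.

Theorem fix_exists : exists X, f X = X.
Proof.
  exists Uw. apply WO_eq; intro y; split; intro h.
  - destruct (classic (dc U y)) as [D|D].
    + apply (proj2 good_Uw); auto.
    + exfalso; apply no_ext; exists y; auto.
  - apply (proj1 good_Uw); auto.
Qed.

End Fix.

Variable L : Type.
Notation sys := (system P le L).

Lemma sub_pi (Q : L -> Prop) (X : {l | Q l} -> WOt) l p q :
  X (exist _ l p) = X (exist _ l q).
Proof. rewrite (proof_irrelevance _ p q); reflexivity. Qed.

Lemma extend_at (I : L -> Prop) i X Xi h :
  extend P le L I i X Xi (exist _ i h) = Xi.
Proof.
  unfold extend; simpl. destruct (excluded_middle_informative (i = i)); auto.
  contradiction.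
Qed.

Lemma extend_other (I : L -> Prop) i X Xi l h (p : I l /\ l <> i) :
  extend P le L I i X Xi (exist _ l h) = X (exist _ l p).
Proof.
  unfold extend; simpl. destruct (excluded_middle_informative (l = i)).
  - destruct p; contradiction.
  - apply sub_pi.
Qed.

Lemma sd_same A y : ~ sd A A y.
Proof. unfold symdiff; tauto. Qed.

Lemma causal_fun (s : sys) : causal s ->
  forall (X X' : { l | sI s l } -> WOt) (o : { l | sO s l }) (y : P),
    sd (proj1_sig (sfun s X o)) (proj1_sig (sfun s X' o)) y ->
    exists (i : { l | sI s l }) (x : P),
      sd (proj1_sig (X i)) (proj1_sig (X' i)) x /\ plt x y.
Proof. intros [_ [_ [_ H]]]; exact H. Qed.

Section FixSys.
Variable s : sys.
Hypothesis Hs : causal s.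
Variables i o : L.
Hypothesis hi : sI s i.
Hypothesis ho : sO s o.
Variable X : { l | sI s l /\ l <> i } -> WOt.

Definition fmap (Xi : WOt) : WOt := sfun s (extend P le L (sI s) i X Xi) (exist _ o ho).

Lemma fmap_causal : forall Y Y' y, sd (proj1_sig (fmap Y)) (proj1_sig (fmap Y')) y ->
  exists x, sd (proj1_sig Y) (proj1_sig Y') x /\ plt x y.
Proof.
  intros Y Y' y H. destruct (causal_fun s Hs _ _ _ _ H) as [[l hl] [x [hx lx]]].
  exists x; split; auto.
  destruct (classic (l = i)) as [e|n].
  - subst. rewrite !extend_at in hx; auto.
  - rewrite !(extend_other _ _ _ _ _ _ (conj hl n)) in hx. exfalso; exact (sd_same _ _ hx).
Qed.

Lemma fix_ex : exists Xi, is_fix s i o X Xi.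
Proof.
  destruct (fix_exists fmap fmap_causal) as [Xi HXi].
  exists Xi. intro h. rewrite <- HXi at 2. unfold fmap. f_equal. f_equal. apply proof_irrelevance.
Qed.

Lemma Xstar_fix : is_fix s i o X (Xstar s i o X).
Proof.
  unfold Xstar. apply epsilon_spec. apply fix_ex.
Qed.

End FixSys.

Lemma joint_unique (s : sys) (E1 E2 : {l | sI s l} -> WOt) (S : P -> Prop) :
  causal s -> WF S -> (forall l y, sd (proj1_sig (E1 l)) (proj1_sig (E2 l)) y -> S y) ->
  (forall l, E1 l = E2 l \/ exists o, sfun s E1 o = E1 l /\ sfun s E2 o = E2 l) ->
  forall l, E1 l = E2 l.
Proof.
  intros Hs HW HS Hl.
  apply NNPP; intro Hn. apply not_all_ex_not in Hn. destruct Hn as [l0 Hl0].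
  destruct (WO_neq _ _ Hl0) as [y0 Hy0].
  destruct (HW (fun y => exists l, sd (proj1_sig (E1 l)) (proj1_sig (E2 l)) y)) as [m [[l Hm] Hmin]].
  { intros a [l h]; eauto. } { eauto. }
  destruct (Hl l) as [e|[o [e1 e2]]].
  { rewrite e in Hm; exact (sd_same _ _ Hm). }
  rewrite <- e1, <- e2 in Hm.
  destruct (causal_fun s Hs _ _ _ _ Hm) as [l' [x [hx lx]]].
  exact (Hmin x (ex_intro _ l' hx) lx).
Qed.

Lemma descent (s : sys) (E1 E2 : {l | sI s l} -> WOt) (i : {l | sI s l}) (o : {l | sO s l}) :
  causal s -> sfun s E1 o = E1 i -> sfun s E2 o = E2 i ->
  forall z, sd (proj1_sig (E1 i)) (proj1_sig (E2 i)) z ->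
  exists l x, proj1_sig l <> proj1_sig i /\ sd (proj1_sig (E1 l)) (proj1_sig (E2 l)) x /\ plt x z.
Proof.
  intros Hs e1 e2 z Hz.
  apply NNPP; intro Hn.
  assert (HW : WF (fun y => proj1_sig (E1 i) y \/ proj1_sig (E2 i) y)).
  { apply WF_union; apply WO_WF; apply proj2_sig. }
  destruct (HW (fun z => sd (proj1_sig (E1 i)) (proj1_sig (E2 i)) z /\
     ~ exists l x, proj1_sig l <> proj1_sig i /\ sd (proj1_sig (E1 l)) (proj1_sig (E2 l)) x /\ plt x z))
    as [m [[Hm Hm'] Hmin]].
  { intros a [h _]; unfold symdiff in h; tauto. } { eauto. }
  assert (Hm2 := Hm). rewrite <- e1, <- e2 in Hm2.
  destruct (causal_fun s Hs _ _ _ _ Hm2) as [l [x [hx lx]]].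
  destruct (classic (proj1_sig l = proj1_sig i)) as [e|n].
  - assert (l = i) by (destruct l, i; simpl in e; subst; f_equal; apply proof_irrelevance).
    subst l.
    destruct (classic (exists l x', proj1_sig l <> proj1_sig i /\ sd (proj1_sig (E1 l)) (proj1_sig (E2 l)) x' /\ plt x' x)) as [[l' [x' [h1 [h2 h3]]]]|hn].
    + apply Hm'. exists l', x'; split; auto; split; auto.
      destruct h3 as [h3 _]; eapply le_plt_trans; eauto.
    + exact (Hmin x (conj hx hn) lx).
  - apply Hm'. exists l, x; auto.
Qed.


Lemma fix_unique (s : sys) (Hs : causal s) i o (hi : sI s i) (ho : sO s o) X Y Y' :
  is_fix s i o X Y -> is_fix s i o X Y' -> Y = Y'.
Proof.
  intros H1 H2.
  assert (J := joint_unique s (extend P le L (sI s) i X Y) (extend P le L (sI s) i X Y')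
    (fun y => proj1_sig Y y \/ proj1_sig Y' y) Hs).
  rewrite <- (extend_at (sI s) i X Y hi), <- (extend_at (sI s) i X Y' hi).
  apply J.
  - apply WF_union; apply WO_WF; apply proj2_sig.
  - intros [l hl] y Hy. destruct (classic (l = i)) as [e|n].
    + subst; rewrite !extend_at in Hy; unfold symdiff in Hy; tauto.
    + rewrite !(extend_other _ _ _ _ _ _ (conj hl n)) in Hy. exfalso; exact (sd_same _ _ Hy).
  - intros [l hl]. destruct (classic (l = i)) as [e|n].
    + subst; right; exists (exist _ o ho). rewrite !extend_at. auto.
    + left; rewrite !(extend_other _ _ _ _ _ _ (conj hl n)); auto.
Qed.

Lemma conn_val (s : sys) i o X o' :
  sfun (conn s i o) X o' =
  sfun s (extend P le L (sI s) i X (Xstar s i o X)) (exist _ (proj1_sig o') (proj1 (proj2_sig o'))).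
Proof. reflexivity. Qed.

Lemma finite_sub (I J : L -> Prop) : (forall l, I l -> J l) -> finite_set L J -> finite_set L I.
Proof. intros H [l Hl]; exists l; auto. Qed.

Lemma conn_causal (s : sys) i o : causal s -> sI s i -> sO s o -> causal (conn s i o).
Proof.
  intros Hs hi ho. pose proof Hs as [F1 [F2 [D _]]].
  split; [|split; [|split]].
  - eapply finite_sub; [|exact F1]. intros l h; apply h.
  - eapply finite_sub; [|exact F2]. intros l h; apply h.
  - intros l h1 h2; eapply D; [apply h1|apply h2].
  - intros X X' o' y Hy.
    rewrite !conn_val in Hy.
    destruct (causal_fun s Hs _ _ _ _ Hy) as [[l hl] [x [hx lx]]].
    destruct (classic (l = i)) as [e|n].
    + subst l. rewrite !extend_at in hx.
      pose proof (Xstar_fix s Hs i o ho X ho) as f1.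
      pose proof (Xstar_fix s Hs i o ho X' ho) as f2.
      rewrite <- (extend_at (sI s) i X (Xstar s i o X) hl) in f1 at 2.
      rewrite <- (extend_at (sI s) i X' (Xstar s i o X') hl) in f2 at 2.
      rewrite <- (extend_at (sI s) i X (Xstar s i o X) hl),
              <- (extend_at (sI s) i X' (Xstar s i o X') hl) in hx.
      destruct (descent s _ _ _ _ Hs f1 f2 x hx) as [[l' hl'] [x' [n' [hx' lx']]]].
      simpl in n'.
      rewrite !(extend_other _ _ _ _ _ _ (conj hl' n')) in hx'.
      exists (exist _ l' (conj hl' n')), x'; split; auto.
      destruct lx' as [lx' _]; eapply le_plt_trans; eauto.
    + rewrite !(extend_other _ _ _ _ _ _ (conj hl n)) in hx.
      exists (exist _ l (conj hl n)), x; auto.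
Qed.

Lemma sfun_congr (s : sys) A B o p q :
  (forall l h, A (exist _ l h) = B (exist _ l h)) ->
  sfun s A (exist _ o p) = sfun s B (exist _ o q).
Proof.
  intro H. assert (A = B) by (apply functional_extensionality; intros [l h]; auto).
  subst; rewrite (proof_irrelevance _ p q); reflexivity.
Qed.

Lemma sys_ext (s t : sys) (HI : forall l, sI s l <-> sI t l) (HO : forall l, sO s l <-> sO t l) :
  (forall X o, sfun s X o = sfun t (fun l => X (exist _ (proj1_sig l) (proj2 (HI _) (proj2_sig l))))
                                  (exist _ (proj1_sig o) (proj1 (HO _) (proj2_sig o)))) -> s = t.
Proof.
  destruct s as [I O F], t as [I' O' F']; simpl in *. intro H.
  assert (I = I') by (apply functional_extensionality; intro; apply propositional_extensionality; auto).
  assert (O = O') by (apply functional_extensionality; intro; apply propositional_extensionality; auto).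
  subst I' O'. f_equal.
  apply functional_extensionality; intro X; apply functional_extensionality; intro o.
  rewrite H. destruct o as [o ho]. simpl.
  apply sfun_congr with (s := Sys I O F') (A := fun l => X (exist _ (proj1_sig l) (proj2 (HI _) (proj2_sig l)))).
  intros l h; simpl; apply sub_pi.
Qed.

Lemma gamma_io (s : sys) i o : causal s -> sI s i -> sO s o ->
  gamma s i o = conn s i o /\ gamma s o i = conn s i o.
Proof.
  intros [_ [_ [D _]]] hi ho. unfold gamma. split.
  - destruct (excluded_middle_informative (sI s i)); [auto|contradiction].
  - destruct (excluded_middle_informative (sI s o)); [exfalso; eauto|auto].
Qed.


Lemma double_facts (s : sys) i o i' o' (X : {l | (sI s l /\ l <> i) /\ l <> i'} -> WOt) :
  causal s -> sI s i -> sO s o -> sI s i' -> sO s o' -> i' <> i -> o' <> o ->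
  forall (hi : sI s i) (ho : sO s o) (hi' : sI s i') (ho' : sO s o'),
  let Ec := extend P le L (sI (conn s i o)) i' X (Xstar (conn s i o) i' o' X) in
  let E := extend P le L (sI s) i Ec (Xstar s i o Ec) in
  sfun s E (exist _ o ho) = E (exist _ i hi) /\
  sfun s E (exist _ o' ho') = E (exist _ i' hi') /\
  (forall l h (p : (sI s l /\ l <> i) /\ l <> i'), E (exist _ l h) = X (exist _ l p)).
Proof.
  intros Hs _ _ _ _ ni no hi ho hi' ho' Ec E.
  split; [|split].
  - unfold E; rewrite extend_at. apply (Xstar_fix s Hs i o ho Ec ho).
  - unfold E. rewrite (extend_other _ _ _ _ _ _ (conj hi' ni)).
    unfold Ec; rewrite extend_at.
    assert (Hc := conn_causal s i o Hs hi ho).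
    pose proof (Xstar_fix (conn s i o) Hc i' o' (conj ho' no) X (conj ho' no)) as e.
    rewrite conn_val in e. simpl in e. etransitivity; [|exact e].
    apply sfun_congr; intros; reflexivity.
  - intros l h p. unfold E. rewrite (extend_other _ _ _ _ _ _ (proj1 p)).
    unfold Ec. rewrite (extend_other _ _ _ _ _ _ p). reflexivity.
Qed.

Lemma conn_comm (s : sys) i o i' o' : causal s -> sI s i -> sO s o -> sI s i' -> sO s o' ->
  i' <> i -> o' <> o -> conn (conn s i o) i' o' = conn (conn s i' o') i o.
Proof.
  intros Hs hi ho hi' ho' ni no.
  assert (HI : forall l, sI (conn (conn s i o) i' o') l <-> sI (conn (conn s i' o') i o) l)
    by (intro; simpl; tauto).
  assert (HO : forall l, sO (conn (conn s i o) i' o') l <-> sO (conn (conn s i' o') i o) l)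
    by (intro; simpl; tauto).
  apply (sys_ext _ _ HI HO).
  intros X [o'' ho'']. rewrite !conn_val. simpl proj1_sig.
  match goal with |- sfun s ?A _ = sfun s ?B _ => set (E1 := A); set (E2 := B) end.
  set (X2 := fun l : {l | sI (conn (conn s i' o') i o) l} =>
    X (exist _ (proj1_sig l) (proj2 (HI (proj1_sig l)) (proj2_sig l)))) in *.
  destruct (double_facts s i o i' o' X Hs hi ho hi' ho' ni no hi ho hi' ho') as [A1 [A2 A3]].
  fold E1 in A1, A2, A3.
  destruct (double_facts s i' o' i o X2 Hs hi' ho' hi ho (not_eq_sym ni) (not_eq_sym no) hi' ho' hi ho) as [B1 [B2 B3]].
  fold E2 in B1, B2, B3.
  assert (Hoth : forall l h, l <> i -> l <> i' -> E1 (exist _ l h) = E2 (exist _ l h)).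
  { intros l h n1 n2.
    rewrite (A3 l h (conj (conj h n1) n2)).
    etransitivity; [|symmetry; apply (B3 l h (conj (conj h n2) n1))].
    unfold X2; simpl; apply sub_pi. }
  assert (HE : forall l, E1 l = E2 l).
  { apply (joint_unique s E1 E2
      (fun y => (proj1_sig (E1 (exist _ i hi)) y \/ proj1_sig (E2 (exist _ i hi)) y) \/
                (proj1_sig (E1 (exist _ i' hi')) y \/ proj1_sig (E2 (exist _ i' hi')) y)) Hs).
    - repeat apply WF_union; apply WO_WF; apply proj2_sig.
    - intros [l hl] y Hy.
      destruct (classic (l = i)) as [e|n1]; [subst; rewrite (proof_irrelevance _ hl hi) in Hy; unfold symdiff in Hy; tauto|].
      destruct (classic (l = i')) as [e|n2]; [subst; rewrite (proof_irrelevance _ hl hi') in Hy; unfold symdiff in Hy; tauto|].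
      rewrite Hoth in Hy; auto. exfalso; exact (sd_same _ _ Hy).
    - intros [l hl].
      destruct (classic (l = i)) as [e|n1].
      { subst; rewrite (proof_irrelevance _ hl hi). right; exists (exist _ o ho); auto. }
      destruct (classic (l = i')) as [e|n2].
      { subst; rewrite (proof_irrelevance _ hl hi'). right; exists (exist _ o' ho'); auto. }
      left; auto. }
  apply sfun_congr; intros; apply HE.
Qed.


Lemma par_causal (s1 s2 : sys) : causal s1 -> causal s2 -> lab_disjoint s1 s2 -> causal (par s1 s2).
Proof.
  intros Hs1 Hs2 Hd. pose proof Hs1 as [[l1 F1] [[m1 G1] [D1 _]]].
  pose proof Hs2 as [[l2 F2] [[m2 G2] [D2 _]]].
  split; [|split; [|split]].
  - exists (l1 ++ l2); intros x [h|h]; apply in_or_app; auto.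
  - exists (m1 ++ m2); intros x [h|h]; apply in_or_app; auto.
  - unfold lab_disjoint, lab in Hd.
    intros l [h|h] [h'|h']; [eapply D1|eapply Hd|eapply Hd|eapply D2]; eauto.
  - intros X X' [o ho] y. unfold par; simpl.
    destruct (excluded_middle_informative (sO s1 o)) as [h|h]; intro Hy.
    + destruct (causal_fun s1 Hs1 _ _ _ _ Hy) as [[l hl] [x [hx lx]]].
      exists (exist _ l (or_introl hl)), x; auto.
    + destruct (causal_fun s2 Hs2 _ _ _ _ Hy) as [[l hl] [x [hx lx]]].
      exists (exist _ l (or_intror hl)), x; auto.
Qed.

Lemma par_gamma_lab (s1 s2 : sys) : causal s1 -> causal s2 -> lab_disjoint s1 s2 ->
  forall a b : L,
    (lab s1 a -> lab s1 b -> (InGamma (par s1 s2) a b <-> InGamma s1 a b)) /\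
    (lab s2 a -> lab s2 b -> (InGamma (par s1 s2) a b <-> InGamma s2 a b)).
Proof.
  intros _ _ Hd a b. unfold lab_disjoint in Hd.
  pose proof (Hd a) as Ha; pose proof (Hd b) as Hb.
  unfold InGamma, lab in *; simpl. split; intros h1 h2; tauto.
Qed.

Ltac solve_par :=
  repeat (match goal with |- context [excluded_middle_informative ?A] =>
            destruct (excluded_middle_informative A) end); simpl;
  first [ exfalso; tauto | apply sfun_congr; intros; simpl; apply sub_pi ].

Lemma par_comm (s1 s2 : sys) : lab_disjoint s1 s2 -> par s1 s2 = par s2 s1.
Proof.
  intros Hd.
  assert (HI : forall l, sI (par s1 s2) l <-> sI (par s2 s1) l) by (intro; simpl; tauto).
  assert (HO : forall l, sO (par s1 s2) l <-> sO (par s2 s1) l) by (intro; simpl; tauto).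
  apply (sys_ext _ _ HI HO).
  intros X [o ho]. pose proof (Hd o) as Ho. unfold lab in Ho. simpl in ho.
  unfold par; simpl. solve_par.
Qed.

Lemma par_assoc (s1 s2 s3 : sys) : lab_disjoint s1 s2 -> lab_disjoint s1 s3 -> lab_disjoint s2 s3 ->
  par (par s1 s2) s3 = par s1 (par s2 s3).
Proof.
  intros H12 H13 H23.
  assert (HI : forall l, sI (par (par s1 s2) s3) l <-> sI (par s1 (par s2 s3)) l) by (intro; simpl; tauto).
  assert (HO : forall l, sO (par (par s1 s2) s3) l <-> sO (par s1 (par s2 s3)) l) by (intro; simpl; tauto).
  apply (sys_ext _ _ HI HO).
  intros X [o ho]. pose proof (H12 o) as H1; pose proof (H13 o) as H2; pose proof (H23 o) as H3.
  unfold lab in *. simpl in ho.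
  unfold par; simpl. solve_par.
Qed.

Lemma Xstar_par (s1 s2 : sys) i o (Y : {l | sI (par s1 s2) l /\ l <> i} -> WOt)
  (Z : {l | sI s1 l /\ l <> i} -> WOt) :
  causal s1 -> causal s2 -> lab_disjoint s1 s2 -> sI s1 i -> sO s1 o ->
  (forall l h h', Z (exist _ l h) = Y (exist _ l h')) ->
  Xstar s1 i o Z = Xstar (par s1 s2) i o Y.
Proof.
  intros Hs1 Hs2 Hd hi ho HZ.
  apply (fix_unique s1 Hs1 i o hi ho Z).
  - apply (Xstar_fix s1 Hs1 i o ho).
  - pose proof (Xstar_fix (par s1 s2) (par_causal s1 s2 Hs1 Hs2 Hd) i o (or_introl ho) Y) as Hf.
    intro h. specialize (Hf (or_introl h)).
    revert Hf. unfold par at 1. simpl.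
    destruct (excluded_middle_informative (sO s1 o)) as [h'|n]; [|contradiction].
    intro Hf. etransitivity; [|exact Hf].
    apply sfun_congr; intros l hl; simpl.
    destruct (classic (l = i)) as [e|n].
    + subst. rewrite !extend_at. reflexivity.
    + rewrite (extend_other _ _ _ _ _ _ (conj hl n)).
      rewrite (extend_other _ _ _ _ _ _ (conj (or_introl hl) n)). apply HZ.
Qed.

Lemma par_conn (s1 s2 : sys) i o : causal s1 -> causal s2 -> lab_disjoint s1 s2 ->
  sI s1 i -> sO s1 o -> par (conn s1 i o) s2 = conn (par s1 s2) i o.
Proof.
  intros Hs1 Hs2 Hd hi ho.
  pose proof (Hd i (or_introl hi)) as Ni. pose proof (Hd o (or_intror ho)) as No.
  unfold lab in Ni, No.
  assert (HI : forall l, sI (par (conn s1 i o) s2) l <-> sI (conn (par s1 s2) i o) l).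
  { intro l; simpl. destruct (classic (l = i)); [subst|]; tauto. }
  assert (HO : forall l, sO (par (conn s1 i o) s2) l <-> sO (conn (par s1 s2) i o) l).
  { intro l; simpl. destruct (classic (l = o)); [subst|]; tauto. }
  apply (sys_ext _ _ HI HO).
  intros X [o'' ho'']. rewrite conn_val. simpl proj1_sig.
  unfold par at 1. simpl.
  destruct (excluded_middle_informative (sO s1 o'' /\ o'' <> o)) as [h1|h1].
  - unfold restrict; simpl.
    destruct (excluded_middle_informative (sO s1 o'')) as [h2|h2]; [|exfalso; apply h2; apply h1].
    apply sfun_congr; intros l hl; simpl.
    destruct (classic (l = i)) as [e|n].
    + subst. rewrite !extend_at. apply Xstar_par; auto.
      intros l h h'; simpl; apply sub_pi.
    + rewrite (extend_other _ _ _ _ _ _ (conj hl n)).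
      rewrite (extend_other _ _ _ _ _ _ (conj (or_introl hl) n)). simpl; apply sub_pi.
  - simpl in ho''.
    destruct (excluded_middle_informative (sO s1 o'')) as [h2|h2].
    + exfalso. destruct (classic (o'' = o)); [subst|]; tauto.
    + apply sfun_congr; intros l hl; simpl.
      assert (n : l <> i) by (intro; subst; tauto).
      rewrite (extend_other _ _ _ _ _ _ (conj (or_intror hl) n)). simpl; apply sub_pi.
Qed.


Lemma gamma_causal (s : sys) a b : causal s -> InGamma s a b -> causal (gamma s a b).
Proof.
  intros Hs [[h1 h2]|[h1 h2]].
  - rewrite (proj1 (gamma_io s a b Hs h1 h2)). apply conn_causal; auto.
  - rewrite (proj2 (gamma_io s b a Hs h1 h2)). apply conn_causal; auto.
Qed.

Lemma part_i_oriented (s : sys) i o a' b' : causal s -> sI s i -> sO s o ->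
  InGamma (conn s i o) a' b' ->
  InGamma s a' b' /\ InGamma (gamma s a' b') i o /\ InGamma (gamma s a' b') o i /\
  gamma (conn s i o) a' b' = gamma (gamma s a' b') i o /\
  gamma (conn s i o) a' b' = gamma (gamma s a' b') o i.
Proof.
  intros Hs hi ho HG.
  assert (Hc := conn_causal s i o Hs hi ho).
  destruct HG as [[[h1 n1] [h2 n2]]|[[h1 n1] [h2 n2]]].
  - rewrite (proj1 (gamma_io _ a' b' Hc (conj h1 n1) (conj h2 n2))).
    rewrite (proj1 (gamma_io s a' b' Hs h1 h2)).
    assert (Hc' := conn_causal s a' b' Hs h1 h2).
    assert (hi' : sI (conn s a' b') i) by (split; auto).
    assert (ho' : sO (conn s a' b') o) by (split; auto).
    rewrite (proj1 (gamma_io _ i o Hc' hi' ho')), (proj2 (gamma_io _ i o Hc' hi' ho')).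
    rewrite (conn_comm s i o a' b'); auto.
    unfold InGamma; simpl; tauto.
  - rewrite (proj2 (gamma_io _ b' a' Hc (conj h1 n1) (conj h2 n2))).
    rewrite (proj2 (gamma_io s b' a' Hs h1 h2)).
    assert (Hc' := conn_causal s b' a' Hs h1 h2).
    assert (hi' : sI (conn s b' a') i) by (split; auto).
    assert (ho' : sO (conn s b' a') o) by (split; auto).
    rewrite (proj1 (gamma_io _ i o Hc' hi' ho')), (proj2 (gamma_io _ i o Hc' hi' ho')).
    rewrite (conn_comm s i o b' a'); auto.
    unfold InGamma; simpl; tauto.
Qed.

Lemma main_inner :
  (forall (s : sys) (i o : L), causal s -> sI s i -> sO s o ->
     forall X : { l | sI s l /\ l <> i } -> WOt,
       exists! Xi : WOt, is_fix s i o X Xi) /\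
  (forall s1 s2 : sys, causal s1 -> causal s2 ->
     lab_disjoint s1 s2 -> causal (par s1 s2)) /\
  (forall (s : sys) (a b : L), causal s -> InGamma s a b ->
     causal (gamma s a b)) /\
  (forall s1 s2 : sys, causal s1 -> causal s2 -> lab_disjoint s1 s2 ->
     forall a b : L,
       (lab s1 a -> lab s1 b -> (InGamma (par s1 s2) a b <-> InGamma s1 a b)) /\
       (lab s2 a -> lab s2 b -> (InGamma (par s1 s2) a b <-> InGamma s2 a b))) /\
  (forall (s : sys) (a b a' b' : L), causal s -> InGamma s a b ->
     InGamma (gamma s a b) a' b' ->
     InGamma s a' b' /\ InGamma (gamma s a' b') a b /\
     gamma (gamma s a b) a' b' = gamma (gamma s a' b') a b) /\
  (forall s1 s2 s3 : sys, causal s1 -> causal s2 -> causal s3 ->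
     lab_disjoint s1 s2 -> lab_disjoint s1 s3 -> lab_disjoint s2 s3 ->
     par (par s1 s2) s3 = par s1 (par s2 s3)) /\
  (forall s1 s2 : sys, causal s1 -> causal s2 -> lab_disjoint s1 s2 ->
     par s1 s2 = par s2 s1) /\
  (forall (s1 s2 : sys) (a b : L), causal s1 -> causal s2 ->
     lab_disjoint s1 s2 -> InGamma s1 a b ->
     par (gamma s1 a b) s2 = gamma (par s1 s2) a b).
Proof.
  split; [|split; [|split; [|split; [|split; [|split; [|split]]]]]].
  - intros s i o Hs hi ho X.
    destruct (fix_ex s Hs i o ho X) as [Xi HXi].
    exists Xi; split; auto.
    intros Y HY. exact (fix_unique s Hs i o hi ho X Xi Y HXi HY).
  - exact par_causal.
  - exact gamma_causal.
  - exact par_gamma_lab.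
  - intros s a b a' b' Hs [[h1 h2]|[h1 h2]] HG.
    + rewrite (proj1 (gamma_io s a b Hs h1 h2)) in *.
      destruct (part_i_oriented s a b a' b' Hs h1 h2 HG) as [G1 [G2 [G3 [G4 G5]]]]; auto.
    + rewrite (proj2 (gamma_io s b a Hs h1 h2)) in *.
      destruct (part_i_oriented s b a a' b' Hs h1 h2 HG) as [G1 [G2 [G3 [G4 G5]]]]; auto.
  - intros s1 s2 s3 _ _ _; apply par_assoc.
  - intros s1 s2 _ _; apply par_comm.
  - intros s1 s2 a b Hs1 Hs2 Hd [[h1 h2]|[h1 h2]].
    + assert (Hp := par_causal s1 s2 Hs1 Hs2 Hd).
      rewrite (proj1 (gamma_io s1 a b Hs1 h1 h2)).
      rewrite (proj1 (gamma_io (par s1 s2) a b Hp (or_introl h1) (or_introl h2))).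
      apply par_conn; auto.
    + assert (Hp := par_causal s1 s2 Hs1 Hs2 Hd).
      rewrite (proj2 (gamma_io s1 b a Hs1 h1 h2)).
      rewrite (proj2 (gamma_io (par s1 s2) b a Hp (or_introl h1) (or_introl h2))).
      apply par_conn; auto.
Qed.

End Main.

Theorem theorem6p6 :
  forall (P : Type) (le : P -> P -> Prop),
  (forall x, le x x) ->
  (forall x y, le x y -> le y x -> x = y) ->
  (forall x y z, le x y -> le y z -> le x z) ->
  forall (L : Type),
  (* interface connection is well defined: unique solution X* *)
  (forall (s : system P le L) (i o : L), causal s -> sI s i -> sO s o ->
     forall X : { l | sI s l /\ l <> i } -> WO P le,
       exists! Xi : WO P le, is_fix s i o X Xi) /\
  (* closure under parallel composition *)
  (forall s1 s2 : system P le L, causal s1 -> causal s2 ->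
     lab_disjoint s1 s2 -> causal (par s1 s2)) /\
  (* closure under interface connection *)
  (forall (s : system P le L) (a b : L), causal s -> InGamma s a b ->
     causal (gamma s a b)) /\
  (* functional: Γ of a parallel composition *)
  (forall s1 s2 : system P le L, causal s1 -> causal s2 -> lab_disjoint s1 s2 ->
     forall a b : L,
       (lab s1 a -> lab s1 b -> (InGamma (par s1 s2) a b <-> InGamma s1 a b)) /\
       (lab s2 a -> lab s2 b -> (InGamma (par s1 s2) a b <-> InGamma s2 a b))) /\
  (* composition-order invariance (i) *)
  (forall (s : system P le L) (a b a' b' : L), causal s -> InGamma s a b ->
     InGamma (gamma s a b) a' b' ->
     InGamma s a' b' /\ InGamma (gamma s a' b') a b /\
     gamma (gamma s a b) a' b' = gamma (gamma s a' b') a b) /\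
  (* composition-order invariance (ii) *)
  (forall s1 s2 s3 : system P le L, causal s1 -> causal s2 -> causal s3 ->
     lab_disjoint s1 s2 -> lab_disjoint s1 s3 -> lab_disjoint s2 s3 ->
     par (par s1 s2) s3 = par s1 (par s2 s3)) /\
  (forall s1 s2 : system P le L, causal s1 -> causal s2 -> lab_disjoint s1 s2 ->
     par s1 s2 = par s2 s1) /\
  (* composition-order invariance (iii) *)
  (forall (s1 s2 : system P le L) (a b : L), causal s1 -> causal s2 ->
     lab_disjoint s1 s2 -> InGamma s1 a b ->
     par (gamma s1 a b) s2 = gamma (par s1 s2) a b).
Proof.
  intros P le Hr Ha Ht L.
  exact (main_inner P le Hr Ha Ht L).
Qed.
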